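(* Let $\lambda\in(0,r^\alpha)$ and consider the $\lambda$-NRW on the augmented tree. Then for every $f\in\mathcal D_X$, the trace function $\mathrm{Tr}f$ is continuous on $K$.
   Context: Let $\{S_i\}_{i=1}^N$ ($N\ge2$) be contractive similitudes of $\mathbb R^d$ with ratios $r_i\in(0,1)$ satisfying the open set condition; $K$ the self-similar set, $\alpha$ its Hausdorff dimension, $r=\min r_i$. $\Sigma^*$ finite words with empty word $\vartheta$, $S_{\mathbf x}=S_{i_1}\circ\cdots\circ S_{i_k}$, $r_{\mathbf x}=r_{i_1}\cdots r_{i_k}$. $\mathcal J_0=\{\vartheta\}$, $\mathcal J_n=\{i_1\cdots i_k:r_{i_1\cdots i_k}\le r^n<r_{i_1\cdots i_{k-1}}\}$, $X=\bigcup_n\mathcal J_n$, $|\mathbf x|=n$ on $\mathcal J_n$, parent $\mathbf x^-$ the prefix in $\mathcal J_{n-1}$. Edges: $\{\mathbf x,\mathbf x^-\}$ and horizontal $\{\mathbf x,\mathbf y\}$ ($\mathbf x\ne\mathbf y\in\mathcal J_n$, $\inf_{\xi,\eta\in K}|S_{\mathbf x}(\xi)-S_{\mathbf y}(\eta)|\le\gamma r^n$). Geodesic ray: $(\mathbf x_n)$, $\mathbf x_n\in\mathcal J_n$, each a prefix of the next, converging to $\xi$ if $\xi\in S_{\mathbf x_n}(K)$ for all $n$. $\lambda$-NRW conductances: $c(\mathbf x,\mathbf x^-)=r_{\mathbf x}^\alpha\lambda^{-|\mathbf x|}$, $c(\mathbf x,\mathbf y)\asymp r_{\mathbf x}^\alpha\lambda^{-|\mathbf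 x|}$ on horizontal edges. $\mathcal E_X[f]=\frac12\sum_{\mathbf x\sim\mathbf y}c(\mathbf x,\mathbf y)(f(\mathbf x)-f(\mathbf y))^2$, $\mathcal D_X=\{f:\mathcal E_X[f]<\infty\}$. For $\lambda\in(0,r^\alpha)$ and $f\in\mathcal D_X$, $\mathrm{Tr}f(\xi)=\lim_nf(\mathbf x_n)$ for any geodesic ray $(\mathbf x_n)$ converging to $\xi$; this limit exists and does not depend on the ray. *)

(* Defs.v *)
From HB Require Import structures.
From mathcomp Require Import all_boot all_order all_algebra.
From mathcomp Require Import all_classical all_reals all_analysis.
Set Implicit Arguments. Unset Strict Implicit. Unset Printing Implicit Defensive.
Import Order.TTheory GRing.Theory Num.Theory.
Import numFieldNormedType.Exports.
Local Open Scope classical_set_scope.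
Local Open Scope ring_scope.

Section Fractal.
Variable R : realType.
Variable d : nat.
Notation pt := 'rV[R]_d.

Definition enorm (v : pt) : R := Num.sqrt (\sum_(j < d) (v ord0 j) ^+ 2).
Definition edist (x y : pt) : R := enorm (x - y).

Definition similitude (s : R) (S : pt -> pt) : Prop :=
  forall x y, edist (S x) (S y) = s * edist x y.

Definition OSC (N : nat) (S : 'I_N -> pt -> pt) : Prop :=
  exists U : set pt, [/\ open U, U !=set0,
    (forall i, S i @` U `<=` U) &
    (forall i j, i != j -> S i @` U `&` S j @` U = set0)].

(* K is the self-similar set (attractor) of the IFS: the nonempty compact
   set with K = \bigcup_i S_i(K) (unique by Hutchinson's theorem) *)
Definition self_similar_set (N : nat) (S : 'I_N -> pt -> pt) (K : set pt) :=
  [/\ compact K, K !=set0 & K = \bigcup_(i in setT) (S i @` K)].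

Definition ediam (A : set pt) : \bar R :=
  ereal_sup [set (edist x y)%:E | x in A & y in A].

(* diam(U)^s, with the convention diam(emptyset)^s = 0 *)
Definition diam_pow (s : R) (U : set pt) : \bar R :=
  if pselect (U = set0) then 0%E else ((fine (ediam U)) `^ s)%:E.

Definition hausdorff_content (s delta : R) (A : set pt) : \bar R :=
  ereal_inf [set (\sum_(0 <= k <oo) diam_pow s (U k))%E |
     U in [set U : nat -> set pt |
             A `<=` \bigcup_k U k /\ forall k, (ediam (U k) <= delta%:E)%E]].

Definition hausdorff_measure (s : R) (A : set pt) : \bar R :=
  ereal_sup [set hausdorff_content s delta A | delta in [set e : R | 0 < e]].

Definition hausdorff_dim (A : set pt) : R :=
  inf [set s : R | 0 <= s /\ hausdorff_measure s A = 0%E].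

Variable N : nat.
Variable rr : 'I_N -> R.
Variable S : 'I_N -> pt -> pt.

Definition word := seq 'I_N.

Definition Sw (x : word) : pt -> pt := foldr (fun i g => S i \o g) id x.
Definition rw (x : word) : R := \prod_(i <- x) rr i.
Definition rmin : R := \big[Order.min/1]_(i < N) rr i.

Definition inJ (n : nat) (x : word) : Prop :=
  if n is 0 then x = [::]
  else x <> [::] /\ rw x <= rmin ^+ n < rw (take (size x).-1 x).

(* vertices of X are pairs (n, x) with x \in J_n, |(n,x)| = n *)
Definition vertex := (nat * word)%type.
Definition isvertex (u : vertex) : Prop := inJ u.1 u.2.

Definition parent_of (v u : vertex) : Prop :=
  isvertex u /\ isvertex v /\ u.1 = v.1.+1 /\ prefix v.2 u.2.

Definition hedge (gamma : R) (K : set pt) (n : nat) (x y : word) : Prop :=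
  [/\ inJ n x, inJ n y, x <> y &
      inf [set edist (Sw x xi) (Sw y eta) | xi in K & eta in K]
        <= gamma * rmin ^+ n].

Definition adj (gamma : R) (K : set pt) (u v : vertex) : Prop :=
  parent_of v u \/ parent_of u v \/ (u.1 = v.1 /\ hedge gamma K u.1 u.2 v.2).

Definition energy (gamma : R) (K : set pt) (c : vertex -> vertex -> R)
  (f : vertex -> R) : \bar R :=
  (2^-1)%:E * \esum_(p in [set p : vertex * vertex | adj gamma K p.1 p.2])
                 ((c p.1 p.2) * (f p.1 - f p.2) ^+ 2)%:E.

Definition in_DX gamma K c f : Prop := (energy gamma K c f < +oo)%E.

Definition geodesic_ray (xs : nat -> word) : Prop :=
  forall n, inJ n (xs n) /\ prefix (xs n) (xs n.+1).

Definition ray_converges (K : set pt) (xs : nat -> word) (xi : pt) : Prop :=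
  forall n, (Sw (xs n) @` K) xi.

Definition chosen_ray (K : set pt) (xi : pt) : nat -> word :=
  xget (fun _ => [::]) [set xs | geodesic_ray xs /\ ray_converges K xs xi].

Definition Tr (K : set pt) (f : vertex -> R) (xi : pt) : R :=
  lim ((fun n => f (n, chosen_ray K xi n)) @ \oo).

End Fractal.

(* Main.v *)
Require Import Defs.
From HB Require Import structures.
From mathcomp Require Import all_boot all_order all_algebra.
From mathcomp Require Import all_classical all_reals all_analysis.
From mathcomp Require Import ring lra.
Import Order.TTheory GRing.Theory Num.Theory.
Import numFieldNormedType.Exports.
Local Open Scope classical_set_scope.
Local Open Scope ring_scope.
Section Basics.
Variables (R : realType) (N : nat) (rr : 'I_N -> R).
Hypothesis N2 : (2 <= N)%N.
Hypothesis rr01 : forall i, 0 < rr i < 1.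

Lemma rmin_gt0 : 0 < rmin rr.
Proof.
rewrite /rmin; apply: (big_ind (fun x => 0 < x)) => //.
  by move=> x y hx hy; rewrite lt_min hx hy.
by move=> i _; case/andP: (rr01 i).
Qed.

Lemma rmin_le i : rmin rr <= rr i.
Proof. by rewrite /rmin (bigD1 i) //= ge_min lexx. Qed.

Lemma rmin_lt1 : rmin rr < 1.
Proof.
have i0 : 'I_N by exists 0%N; apply: leq_trans N2.
by apply: le_lt_trans (rmin_le i0) _; case/andP: (rr01 i0).
Qed.

Lemma rw_gt0 (x : word N) : 0 < rw rr x.
Proof.
rewrite /rw; elim: x => [|i x IH]; rewrite ?big_nil ?big_cons //.
by rewrite mulr_gt0 //; case/andP: (rr01 i).
Qed.

Lemma rw_rcons (x : word N) i : rw rr (rcons x i) = rw rr x * rr i.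
Proof. by rewrite /rw -cats1 big_cat big_seq1. Qed.

Lemma inJ_lb n (x : word N) : inJ rr n x -> rmin rr ^+ n.+1 <= rw rr x.
Proof.
case: n => [/= ->|n /=].
  by rewrite /rw big_nil expr1 ltW // rmin_lt1.
case=> + /andP[_ hlt]; case/lastP: x hlt => [//|s i] hlt _.
rewrite size_rcons /= -cats1 take_size_cat // in hlt.
rewrite rw_rcons exprS mulrC; apply: ler_pM.
- by rewrite exprn_ge0 // ltW // rmin_gt0.
- by rewrite ltW // rmin_gt0.
- by rewrite ltW.
- exact: rmin_le.
Qed.

End Basics.

Lemma powR_expr (R : realType) (a al : R) n : 0 <= a -> (a ^+ n) `^ al = (a `^ al) ^+ n.
Proof.
move=> a0; elim: n => [|n IH]; first by rewrite !expr0 powR1.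
by rewrite !exprS powRM ?exprn_ge0 // IH.
Qed.

Lemma hdim_ge0 (R : realType) d (K : set 'rV[R]_d) : 0 <= hausdorff_dim K.
Proof.
rewrite /hausdorff_dim.
set E := [set s : R | _].
case: (pselect (E = set0)) => [->|/eqP/set0P ne]; first by rewrite inf0.
by apply: lb_le_inf => // y [].
Qed.
Section Energy.
Variables (R : realType) (d N : nat) (rr : 'I_N -> R)
  (S : 'I_N -> 'rV[R]_d -> 'rV[R]_d) (K : set 'rV[R]_d)
  (alpha gamma lambda : R) (c : vertex N -> vertex N -> R) (f : vertex N -> R).
Hypothesis rr01 : forall i, 0 < rr i < 1.
Hypothesis lam0 : 0 < lambda.
Hypothesis csym : forall u v, c u v = c v u.
Hypothesis cpar : forall u v, parent_of rr v u -> c u v = rw rr u.2 `^ alpha * lambda ^- u.1.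
Variable C : R.
Hypothesis C0 : 0 < C.
Hypothesis ch : forall (n : nat) (x y : word N), hedge rr S gamma K n x y ->
       C^-1 * (rw rr x `^ alpha * lambda ^- n) <= c (n, x) (n, y)
       <= C * (rw rr x `^ alpha * lambda ^- n).
Hypothesis fin : in_DX rr S gamma K c f.

Lemma c_ge0 u v : adj rr S gamma K u v -> 0 <= c u v.
Proof.
have pos : forall (x : word N) (n : nat), 0 <= rw rr x `^ alpha * lambda ^- n.
  by move=> x n; rewrite mulr_ge0 ?powR_ge0 // invr_ge0 exprn_ge0 // ltW.
case => [h|[h|[e h]]]; first by rewrite cpar.
  by rewrite csym cpar.
case: u v e h => [n x] [m y] /= <- /ch /andP[+ _]; apply: le_trans.
by rewrite mulr_ge0 // invr_ge0 ltW.
Qed.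

Definition Esum := (\esum_(p in [set p : vertex N * vertex N | adj rr S gamma K p.1 p.2])
                 ((c p.1 p.2) * (f p.1 - f p.2) ^+ 2)%:E)%E.

Lemma Esum_ge0 : (0 <= Esum)%E.
Proof.
apply: esum_ge0 => p /= hp; rewrite lee_fin mulr_ge0 ?sqr_ge0 //.
exact: c_ge0.
Qed.

Lemma Esum_fin : Esum \is a fin_num.
Proof.
rewrite ge0_fin_numE ?Esum_ge0 //.
move: fin; rewrite /in_DX /energy -/Esum.
case: Esum => [r _|h|//]; first exact: ltry.
by move: h; rewrite gt0_muley ?ltxx // lte_fin invr_gt0.
Qed.

Definition E' := fine Esum.

Lemma E'_ge0 : 0 <= E'.
Proof. by rewrite /E' fine_ge0 // Esum_ge0. Qed.

Lemma term_le u v : adj rr S gamma K u v -> c u v * (f u - f v) ^+ 2 <= E'.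
Proof.
move=> h; rewrite -lee_fin /E' fineK ?Esum_fin //.
apply: esum_ge; exists [set (u, v)].
  split; first exact: finite_set1.
  by move=> p /= ->.
by rewrite fsbig_set1.
Qed.

Lemma diff_bound u v k : adj rr S gamma K u v -> 0 < k -> k <= c u v ->
  `|f u - f v| <= Num.sqrt (E' / k).
Proof.
move=> h k0 kc; rewrite -sqrtr_sqr ler_wsqrtr //.
rewrite ler_pdivlMr //; apply: le_trans (@term_le u v h).
rewrite mulrC.
by rewrite ler_wpM2r ?sqr_ge0.
Qed.

End Energy.
Lemma geo_lim (R : realType) (g : nat -> R) (A s : R) : 0 <= A -> 0 <= s -> s < 1 ->
  (forall n, `|g n - g n.+1| <= A * s ^+ n.+1) ->
  exists L, g @ \oo --> L /\ forall n, `|g n - L| <= A * s ^+ n.+1 / (1 - s).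
Proof.
move=> A0 s0 s1 hg.
have s1' : 0 < 1 - s by rewrite subr_gt0.
pose B n := A * s ^+ n.+1 / (1 - s).
have s1n : 1 - s != 0 by rewrite subr_eq0 eq_sym lt_eqF.
have hB n : B n - B n.+1 = A * s ^+ n.+1.
  rewrite /B [s ^+ n.+2]exprS; field; exact: s1n.
have B0 n : 0 <= B n by rewrite /B divr_ge0 ?mulr_ge0 ?exprn_ge0 // ltW.
pose h n := g n + B n.
pose k n := g n - B n.
have hdec : nonincreasing_seq h.
  apply/nonincreasing_seqP => n; rewrite /h.
  have := hB n; have := hg n; rewrite distrC => /(le_trans (ler_norm _)).
  lra.
have kinc : nondecreasing_seq k.
  apply/nondecreasing_seqP => n; rewrite /k.
  have := hB n; have := hg n; move=> /(le_trans (ler_norm _)).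
  lra.
have hk n : k n <= h n by rewrite /k /h; have := B0 n; lra.
have hlb : has_lbound (range h).
  exists (k 0%N) => _ [n _ <-]; apply: le_trans (hk n).
  exact: kinc.
have hcv := nonincreasing_cvgn hdec hlb.
set L := inf (range h) in hcv.
have Bcv : B @ \oo --> 0.
  have -> : B = (fun n => (A * s / (1 - s)) * s ^+ n).
    by apply: funext => n; rewrite /B exprS; field; exact: s1n.
  rewrite -(mulr0 (A * s / (1 - s))); apply: cvgMr.
  by apply: cvg_expr; rewrite ger0_norm.
have gcv : g @ \oo --> L.
  have -> : g = (fun n => h n - B n) by apply: funext => n; rewrite /h addrK.
  by rewrite -(subr0 L); apply: cvgB.
have kcv : k @ \oo --> L.
  rewrite /k -(subr0 L); apply: cvgB => //.
exists L; split => // n.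
have hL : L <= h n.
  have := nonincreasing_cvgn_ge hdec (cvgP _ hcv) n.
  by rewrite (cvg_lim _ hcv).
have kL : k n <= L.
  have := nondecreasing_cvgn_le kinc (cvgP _ kcv) n.
  by rewrite (cvg_lim _ kcv).
move: hL kL; rewrite /h /k /B => hL kL.
by rewrite ler_norml; apply/andP; split; lra.
Qed.
Section Rays.
Variables (R : realType) (d N : nat) (rr : 'I_N -> R)
  (S : 'I_N -> 'rV[R]_d -> 'rV[R]_d) (K : set 'rV[R]_d).
Hypothesis N2 : (2 <= N)%N.
Hypothesis rr01 : forall i, 0 < rr i < 1.
Hypothesis Kss : self_similar_set S K.

Lemma Sw_cat (s t : word N) : Sw S (s ++ t) =1 Sw S s \o Sw S t.
Proof. by elim: s => [|i s IH] x //=; rewrite IH. Qed.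

Lemma mkseqD (T : Type) (a : nat -> T) m k :
  mkseq a (m + k) = mkseq a m ++ mkseq (fun i => a (m + i)%N) k.
Proof. by rewrite /mkseq iotaD map_cat add0n -(addn0 m) iotaDl -map_comp addn0. Qed.

Definition rM := \big[Order.max/0]_(i < N) rr i.

Lemma rM_ge i : rr i <= rM.
Proof. by rewrite /rM (bigD1 i) //= le_max lexx. Qed.

Lemma rM_lt1 : rM < 1.
Proof.
rewrite /rM; apply: (big_ind (fun x => x < 1)) => //.
  by move=> x y hx hy; rewrite gt_max hx hy.
by move=> i _; case/andP: (rr01 i).
Qed.

Lemma rM_ge0 : 0 <= rM.
Proof.
rewrite /rM; apply: (big_ind (fun x => 0 <= x)) => //.
  by move=> x y hx hy; rewrite le_max hx.
by move=> i _; case/andP: (rr01 i) => /ltW.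
Qed.

Lemma ray_exists xi : K xi ->
  exists xs, geodesic_ray rr xs /\ ray_converges S K xs xi.
Proof.
case: Kss => _ _ Keq.
have i0 : 'I_N by exists 0%N; apply: leq_trans N2.
have step : forall p, exists ip : 'I_N * 'rV[R]_d, K p -> K ip.2 /\ p = S ip.1 ip.2.
  move=> p; case: (pselect (K p)) => [Kp|nK]; last by exists (i0, p).
  move: Kp; rewrite {1}Keq => -[i _ [p' Kp' <-]].
  by exists (i, p').
have [F hF] := choice step.
move=> Kxi.
pose pts k := iter k (fun p => (F p).2) xi.
pose a k := (F (pts k)).1.
have Kpts k : K (pts k).
  by elim: k => [|k IH] //=; case: (hF _ IH).
have ptsS k : pts k = S (a k) (pts k.+1) by case: (hF _ (Kpts k)).
have conv m : xi = Sw S (mkseq a m) (pts m).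
  elim: m => [//|m IH]; rewrite mkseqS -cats1 Sw_cat /= -ptsS.
  exact: IH.
have rwb m : rw rr (mkseq a m) <= rM ^+ m.
  elim: m => [|m IH]; first by rewrite /rw big_nil.
  rewrite mkseqS rw_rcons exprSr; apply: ler_pM => //.
  - by apply: ltW; apply: rw_gt0.
  - by case/andP: (rr01 (a m)) => /ltW.
  - exact: rM_ge.
have ex n : exists m, rw rr (mkseq a m) <= rmin rr ^+ n.
  have : (GRing.exp rM : R ^nat) @ \oo --> 0.
    by apply: cvg_expr; rewrite ger0_norm ?rM_ge0 ?rM_lt1.
  move/cvgrPdist_lt => /(_ (rmin rr ^+ n)).
  rewrite exprn_gt0 ?rmin_gt0 // => /(_ isT) /filter_ex [m].
  rewrite sub0r normrN ger0_norm ?exprn_ge0 ?rM_ge0 // => hm.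
  by exists m; apply: le_trans (rwb m) (ltW hm).
pose m n := ex_minn (ex n).
have m0 : m 0%N = 0%N.
  rewrite /m; case: ex_minnP => k _ /(_ 0%N); rewrite /rw big_nil expr0 lexx.
  by move/(_ isT); rewrite leqn0 => /eqP.
have mP n : rw rr (mkseq a (m n)) <= rmin rr ^+ n by rewrite /m; case: ex_minnP.
have mmin n k : rw rr (mkseq a k) <= rmin rr ^+ n -> (m n <= k)%N.
  by rewrite /m; case: ex_minnP => k' _ H /H.
have mmono n : (m n <= m n.+1)%N.
  apply: mmin; apply: le_trans (mP n.+1) _.
  apply: ler_wiXn2l => //; first exact/ltW/rmin_gt0.
  exact/ltW/rmin_lt1.
exists (fun n => mkseq a (m n)); split; last first.
  by move=> n; exists (pts (m n)) => //; rewrite -conv.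
move=> n; split; last first.
  rewrite -(subnKC (mmono n)) mkseqD; exact: prefix_prefix.
case: n => [|n] /=; first by rewrite m0.
have mpos : (0 < m n.+1)%N.
  rewrite lt0n; apply/eqP => e; have := mP n.+1; rewrite e /rw big_nil.
  apply/negP; rewrite -ltNge exprn_ilt1 //; first exact/ltW/rmin_gt0.
  exact: rmin_lt1.
split.
  by rewrite -(prednK mpos) mkseqS; case: (mkseq _ _).
apply/andP; split; first exact: mP.
rewrite size_mkseq -{2}(prednK mpos) mkseqS -cats1 take_size_cat ?size_mkseq //.
rewrite ltNge; apply/negP => /mmin.
by rewrite leqNgt ltn_predL mpos.
Qed.

End Rays.
Lemma sqrt_geo (R : realType) (E a q l : R) m : 0 <= E -> 0 < a -> 0 < q -> 0 < l ->
  Num.sqrt (E / (a * (q / l) ^+ m)) = Num.sqrt (E / a) * Num.sqrt (l / q) ^+ m.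
Proof.
move=> E0 a0 q0 l0.
have -> : E / (a * (q / l) ^+ m) = E / a * (Num.sqrt (l / q) ^+ m) ^+ 2.
  rewrite -exprM mulnC exprM sqr_sqrtr ?divr_ge0 ?ltW // !expr_div_n.
  by field; rewrite !expf_neq0 ?lt0r_neq0.
rewrite sqrtrM; last by rewrite divr_ge0 // ltW.
by rewrite (sqrtr_sqr (Num.sqrt (l / q) ^+ m)) ger0_norm.
Qed.
Theorem lemma3p4 (R : realType) (d N : nat) (rr : 'I_N -> R)
    (S : 'I_N -> 'rV[R]_d -> 'rV[R]_d) (K : set 'rV[R]_d)
    (alpha gamma lambda : R) (c : vertex N -> vertex N -> R) :
  (2 <= N)%N ->
  (forall i, 0 < rr i < 1) ->
  (forall i, similitude (rr i) (S i)) ->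
  OSC S ->
  self_similar_set S K ->
  alpha = hausdorff_dim K ->
  0 < gamma ->
  0 < lambda < rmin rr `^ alpha ->
  (* conductances of the lambda-NRW *)
  (forall u v, c u v = c v u) ->
  (forall u v, parent_of rr v u -> c u v = rw rr u.2 `^ alpha * lambda ^- u.1) ->
  (exists C : R, 0 < C /\
     forall (n : nat) (x y : word N), hedge rr S gamma K n x y ->
       C^-1 * (rw rr x `^ alpha * lambda ^- n) <= c (n, x) (n, y)
       <= C * (rw rr x `^ alpha * lambda ^- n)) ->
  forall f : vertex N -> R, in_DX rr S gamma K c f ->
  {within K, continuous (Tr rr S K f)}.
Proof.
move=> N2 rr01 _ _ Kss aeq gam0 /andP[lam0 lamq] csym cpar [C [C0 ch]] f fin.
have a0 : 0 <= alpha by rewrite aeq; exact: hdim_ge0.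
set r := rmin rr in lamq.
have r0 : 0 < r := @rmin_gt0 _ _ rr rr01.
have r1 : r < 1 := @rmin_lt1 _ _ rr N2 rr01.
set q := r `^ alpha in lamq.
have q0 : 0 < q by rewrite powR_gt0.
set s := Num.sqrt (lambda / q).
have s0 : 0 <= s by rewrite sqrtr_ge0.
have s1 : s < 1.
  rewrite /s -sqrtr1 ltr_sqrt // ltr_pdivrMr // mul1r //.
have DB := @diff_bound R d N rr S K alpha gamma lambda c f lam0 csym cpar C C0 ch fin.
set E := E' R d N rr S K gamma c f in DB.
have E0 : 0 <= E := @E'_ge0 R d N rr S K alpha gamma lambda c f lam0 csym cpar C C0 ch.
set A := Num.sqrt (E / q).
have A0 : 0 <= A by rewrite sqrtr_ge0.
set D := Num.sqrt (E / (C^-1 * q)).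
have D0 : 0 <= D by rewrite sqrtr_ge0.
have powlb n (x : word N) : inJ rr n x -> q ^+ n.+1 <= rw rr x `^ alpha.
  move=> /(@inJ_lb _ _ rr N2 rr01 n x) h; rewrite /q -powR_expr; last exact: ltW.
  apply: (ge0_ler_powR a0) h; rewrite nnegrE ?exprn_ge0 //; first exact: ltW.
  exact/ltW/(@rw_gt0 _ _ rr rr01).
have vert (xs : nat -> word N) n : geodesic_ray rr xs ->
    `|f (n, xs n) - f (n.+1, xs n.+1)| <= A * s ^+ n.+1.
  move=> gr; have [J1 P1] := gr n.+1; have [J0 P0] := gr n.
  have par : parent_of rr (n, xs n) (n.+1, xs n.+1) by [].
  rewrite distrC /A /s -sqrt_geo //; apply: DB.
  - by left.
  - by rewrite mulr_gt0 // exprn_gt0 // divr_gt0.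
  rewrite cpar //= expr_div_n mulrA -exprS.
  apply: ler_wpM2r; first by rewrite invr_ge0 exprn_ge0 // ltW.
  exact: powlb.
have horiz n (x y : word N) : hedge rr S gamma K n x y ->
    `|f (n, x) - f (n, y)| <= D * s ^+ n.
  move=> h; have [Jx _ _ _] := h.
  have Cq : 0 < C^-1 * q by rewrite mulr_gt0 // invr_gt0.
  rewrite /D /s -sqrt_geo //; apply: DB.
  - by right; right; split.
  - by rewrite mulr_gt0 // exprn_gt0 // divr_gt0.
  apply: le_trans (andP (ch _ _ _ h)).1.
  rewrite -mulrA; apply: ler_wpM2l; first by rewrite invr_ge0 ltW.
  rewrite expr_div_n mulrA -exprS.
  apply: ler_wpM2r; first by rewrite invr_ge0 exprn_ge0 // ltW.
  exact: powlb.
have crP xi : K xi -> geodesic_ray rr (chosen_ray rr S K xi) /\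
    ray_converges S K (chosen_ray rr S K xi) xi.
  move=> Kxi; rewrite /chosen_ray.
  apply: (@xgetPex _ (fun _ => [::])
    [set xs | geodesic_ray rr xs /\ ray_converges S K xs xi]).
  exact: (@ray_exists R d N rr S K N2 rr01 Kss xi Kxi).
have trB xi : K xi -> forall n,
    `|f (n, chosen_ray rr S K xi n) - Tr rr S K f xi| <= A * s ^+ n.+1 / (1 - s).
  move=> Kxi; have [gr _] := crP xi Kxi.
  have [L [Lc Lb]] := @geo_lim R (fun n => f (n, chosen_ray rr S K xi n)) A s A0 s0 s1
    (fun n => vert _ n gr).
  suff -> : Tr rr S K f xi = L by exact: Lb.
  by rewrite /Tr; apply: cvg_lim.
apply/subspace_continuousP => x Kx.
apply/cvgrPdist_lt => e e0.
have s1n : 1 - s != 0 by rewrite subr_eq0 eq_sym lt_eqF.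
have s1p : 0 < 1 - s by rewrite subr_gt0.
set M := 2 * A * s / (1 - s) + D + 1.
have M0 : 0 < M.
  rewrite /M ltr_pwDr // addr_ge0 // divr_ge0 ?mulr_ge0 // ltW //.
have [n hn] : exists n, s ^+ n < e / M.
  have := @cvg_expr R s; rewrite ger0_norm // => /(_ s1) /cvgrPdist_lt.
  move=> /(_ (e / M) (divr_gt0 e0 M0)) /filter_ex [n].
  by rewrite sub0r normrN ger0_norm ?exprn_ge0 // => hn; exists n.
have key : 2 * (A * s ^+ n.+1 / (1 - s)) + D * s ^+ n < e.
  have -> : 2 * (A * s ^+ n.+1 / (1 - s)) + D * s ^+ n = (M - 1) * s ^+ n.
    by rewrite /M exprS; field.
  move: hn; rewrite ltr_pdivlMr // => hn.
  have sn0 : 0 <= s ^+ n by rewrite exprn_ge0.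
  nra.
set t := gamma * r ^+ n.
have t0 : 0 < t by rewrite mulr_gt0 // exprn_gt0.
rewrite /within /=; apply/nbhs_ballP; exists (t / d.+1%:R).
  by rewrite /= divr_gt0 // ltr0n.
move=> y bxy Ky.
set de := t / d.+1%:R.
have de0 : 0 <= de by rewrite divr_ge0 // ltW.
have ed : Defs.edist x y <= t.
  move: bxy => [_ hb].
  rewrite /Defs.edist /Defs.enorm -(ger0_norm (ltW t0)) -sqrtr_sqr ler_wsqrtr //.
  apply: (@le_trans _ _ (\sum_(j < d) de ^+ 2)).
    apply: ler_sum => j _; rewrite !mxE.
    have := hb ord0 j; rewrite /ball /= ltr_norml => /andP[h1 h2].
    move: h1 h2; rewrite -/de => h1 h2; nra.
  rewrite sumr_const card_ord -mulr_natr.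
  have tde : t = de * (d%:R + 1) by rewrite /de -natr1 mulfVK // lt0r_neq0 // ltr0n.
  have dge : 0 <= d%:R :> R by rewrite ler0n.
  rewrite tde; nra.
set xs := chosen_ray rr S K x.
set ys := chosen_ray rr S K y.
have [grx cvx] := crP x Kx.
have [gry cvy] := crP y Ky.
have hxy : `|f (n, xs n) - f (n, ys n)| <= D * s ^+ n.
  case: (eqVneq (xs n) (ys n)) => [->|neq].
    by rewrite subrr normr0 mulr_ge0 ?exprn_ge0.
  apply: horiz; split.
  - exact: (grx n).1.
  - exact: (gry n).1.
  - exact/eqP.
  apply: le_trans ed.
  have [a1 Ka1 ea1] := cvx n.
  have [b1 Kb1 eb1] := cvy n.
  apply: ge_inf.
    by exists 0 => z /= [? _ [? _ <-]]; exact: sqrtr_ge0.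
  exists a1 => //; exists b1 => //.
  by rewrite ea1 eb1.
have := trB x Kx n; have := trB y Ky n.
rewrite -/xs -/ys /from_subspace.
set B := A * s ^+ n.+1 / (1 - s) in key *.
rewrite !ler_norml ltr_norml => /andP[h1 h2] /andP[h3 h4].
move: hxy; rewrite ler_norml => /andP[h5 h6].
apply/andP; split; lra.
Qed.
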